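(* Let $0\le\alpha<1$ and let $G$ be a graph on $n$ vertices with minimum degree $\delta\ge 1$. Let $\mathbf{x}=(x_1,\dots,x_n)$ be a non-negative unit eigenvector of $A_\alpha(G)$ corresponding to $\lambda_\alpha(G)$ and $x=\min\{x_1,\dots,x_n\}$. Then $$x^2 \leq \frac{\delta (1-\alpha)^2}{(\lambda_{\alpha}(G)-\alpha \delta)^2+\delta(n-\delta) (1-\alpha)^2}.$$
   Context: $A_\alpha(G)=\alpha D(G)+(1-\alpha)A(G)$, where $A(G)$ is the adjacency matrix and $D(G)$ the diagonal degree matrix; $\lambda_\alpha(G)$ is its largest eigenvalue. *)

(* Defs.v *)
From HB Require Import structures.
From mathcomp Require Import all_boot all_order all_algebra.
Set Implicit Arguments. Unset Strict Implicit. Unset Printing Implicit Defensive.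
Import Order.TTheory GRing.Theory Num.Theory.
Local Open Scope ring_scope.

Definition simple_graph (n : nat) (e : rel 'I_n) : Prop :=
  (forall i j, e i j = e j i) /\ (forall i, e i i = false).

Definition deg (n : nat) (e : rel 'I_n) (i : 'I_n) : nat := #|[set j | e i j]|.

Definition is_min_degree (n : nat) (e : rel 'I_n) (delta : nat) : Prop :=
  (exists i, deg e i = delta) /\ (forall i, (delta <= deg e i)%N).

Definition adjmx (R : numDomainType) (n : nat) (e : rel 'I_n) : 'M[R]_n :=
  \matrix_(i, j) (e i j)%:R.
Definition degmx (R : numDomainType) (n : nat) (e : rel 'I_n) : 'M[R]_n :=
  diag_mx (\row_i (deg e i)%:R).

Definition Aalpha (R : numDomainType) (n : nat) (alpha : R) (e : rel 'I_n) : 'M[R]_n :=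
  alpha *: degmx R e + (1 - alpha) *: adjmx R e.

Definition is_largest_eigenvalue (R : realFieldType) (n : nat) (M : 'M[R]_n) (lam : R) : Prop :=
  eigenvalue M lam /\ (forall mu : R, eigenvalue M mu -> mu <= lam).

(* Main.v *)
Require Import Defs.
From HB Require Import structures.
From mathcomp Require Import all_boot all_order all_algebra ring lra.
Import Order.TTheory GRing.Theory Num.Theory.
Local Open Scope ring_scope.

Lemma cs (R : realFieldType) (I : finType) (P : {pred I}) (f : I -> R) :
  (\sum_(i in P) f i) ^+ 2 <= #|P|%:R * \sum_(i in P) f i ^+ 2.
Proof.
set S := \sum_(i in P) f i; set T := \sum_(i in P) f i ^+ 2; set k : R := #|P|%:R.
have H : 0 <= \sum_(i in P) (k ^+2 * f i ^+ 2 - (k * S * 2) * f i + S ^+2).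
  by apply: sumr_ge0 => i _; rewrite (_ : _ + _ = (k * f i - S) ^+ 2) ?sqr_ge0 //; ring.
rewrite big_split /= sumrB sumr_const -!mulr_sumr -/T -/S -/k in H.
have E : 0 <= k * (k * T - S ^+ 2) by rewrite (_ : _ * _ = k ^+ 2 * T - k * S * 2 * S + S ^+ 2 *+ #|P|) // -mulr_natr; ring.
have k0 : 0 <= k by rewrite /k ler0n.
case: (ltrgt0P k) => [kp||k0'].
- by rewrite -subr_ge0; rewrite pmulr_rge0 in E.
- by move=> kn; have := lt_le_trans kn k0; rewrite ltxx.
- have: #|P| = 0%N by apply/eqP; rewrite -(eqr_nat R) -/k k0'.
  move/card0_eq => P0.
  by rewrite /S /T !big_pred0 // ?expr0n ?mulr0.
Qed.

Theorem lemma5p3 (R : realFieldType) (n : nat) (e : rel 'I_n) (alpha : R)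
  (delta : nat) (lam : R) (x : 'cV[R]_n) (xmin : R) :
  0 <= alpha -> alpha < 1 ->
  simple_graph e ->
  is_min_degree e delta -> (1 <= delta)%N ->
  is_largest_eigenvalue (Aalpha alpha e) lam ->
  Aalpha alpha e *m x = lam *: x ->
  (forall i, 0 <= x i 0) ->
  \sum_(i < n) x i 0 ^+ 2 = 1 ->
  (exists i, x i 0 = xmin) -> (forall i, xmin <= x i 0) ->
  xmin ^+ 2 <= delta%:R * (1 - alpha) ^+ 2 /
     ((lam - alpha * delta%:R) ^+ 2 + delta%:R * (n - delta)%:R * (1 - alpha) ^+ 2).
Proof.
move=> a0 a1 [esym eirr] [[u du] mind] d1 _ Heig xge0 xsum [i0 xi0] xminle.
have row := congr1 (fun M : 'cV[R]_n => M u 0) Heig.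
rewrite /= !mxE /Aalpha in row.
set P := [set j | e u j].
have cP : #|P| = delta by [].
have rowE : lam * x u 0 = alpha * delta%:R * x u 0 + (1 - alpha) * \sum_(j in P) x j 0.
  rewrite -row (eq_bigr (fun j => alpha * (deg e u)%:R * ((u == j)%:R * x j 0) + (1-alpha) * ((e u j)%:R * x j 0))); last first.
    move=> j _; rewrite !mxE /= mulrnAr; case: (u =P j) => [<-|_]; rewrite /= ?mulr1n ?mulr0n; ring.
  rewrite big_split /= -!mulr_sumr du (bigD1 u) //= big1 ?addr0 ?eqxx ?mul1r; last first.
    by move=> j /negPf; rewrite eq_sym => ->; rewrite mul0r.
  congr (_ + _ * _); rewrite [in RHS]big_mkcond /=; apply: eq_bigr => j _; rewrite inE.
  by case: (e u j); rewrite ?mul1r ?mul0r.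
have CS := @cs R _ P (fun j => x j 0).
rewrite cP in CS.
set S := \sum_(j in P) x j 0 in rowE CS.
set T := \sum_(j in P) x j 0 ^+ 2 in CS.
set c := #|~: P|.
have cPn : (delta + c)%N = n by rewrite -cP cardsC card_ord.
have c1 : (0 < c)%N by apply/card_gt0P; exists u; rewrite in_setC inE eirr.
have -> : (n - delta)%N = c by rewrite -cPn addKn.
have xm0 : 0 <= xmin by rewrite -xi0.
have spl : T + \sum_(j in ~: P) x j 0 ^+ 2 = 1.
  rewrite -xsum [RHS](bigID (mem P)) /=; congr (_ + _); apply: eq_bigl => j.
  by rewrite in_setC.
have lb : xmin ^+ 2 *+ c <= \sum_(j in ~: P) x j 0 ^+ 2.
  rewrite -sumr_const; apply: ler_sum => j _; rewrite !expr2.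
  by apply: ler_pM.
have xu := xminle u.
have sq : xmin ^+ 2 <= x u 0 ^+ 2 by rewrite !expr2; apply: ler_pM.
set a := lam - alpha * delta%:R.
set b := 1 - alpha.
have b0 : 0 < b by rewrite /b subr_gt0.
have ab : a * x u 0 = b * S by rewrite /a /b mulrBl rowE; ring.
have h1 : a ^+ 2 * xmin ^+ 2 <= a ^+ 2 * x u 0 ^+ 2 by apply: ler_wpM2l; rewrite ?sqr_ge0.
have h2 : a ^+ 2 * x u 0 ^+ 2 = b ^+ 2 * S ^+ 2 by rewrite -!exprMn ab.
have h3 : b ^+ 2 * S ^+ 2 <= b ^+ 2 * (delta%:R * T) by apply: ler_wpM2l; rewrite ?sqr_ge0.
have d0 : (1 : R) <= delta%:R by rewrite ler1n.
have c0 : (1 : R) <= c%:R by rewrite ler1n.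
rewrite -mulr_natr in lb.
have D0 : 0 < a ^+ 2 + delta%:R * c%:R * b ^+ 2.
  have : 0 < delta%:R * c%:R * b ^+ 2 :> R.
    by rewrite !mulr_gt0 ?exprn_gt0 // ?ltr0n // -ltnS // ltnS.
  have := sqr_ge0 a; lra.
rewrite ler_pdivlMr //.
have h4 : b ^+ 2 * (delta%:R * T) <= b ^+ 2 * (delta%:R * (1 - xmin ^+ 2 * c%:R)).
  apply: ler_wpM2l; rewrite ?sqr_ge0 //; apply: ler_wpM2l; first by rewrite ler0n.
  lra.
have : a ^+ 2 * xmin ^+ 2 <= b ^+ 2 * (delta%:R * (1 - xmin ^+ 2 * c%:R)) by lra.
move=> h.
have -> : xmin ^+ 2 * (a ^+ 2 + delta%:R * c%:R * b ^+ 2) = a ^+ 2 * xmin ^+ 2 + delta%:R * c%:R * b ^+ 2 * xmin ^+ 2 by ring.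
have -> : delta%:R * b ^+ 2 = b ^+ 2 * (delta%:R * (1 - xmin ^+ 2 * c%:R)) + delta%:R * c%:R * b ^+ 2 * xmin ^+ 2 by ring.
by rewrite lerD2r.
Qed.
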